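(* Let $1\to N\to G\xrightarrow{q}Q\to 1$ be a short exact sequence of groups, let $S$ be a generating set of $G$ and let $\mathcal{P}$ be a family of proper subgroups of $G$ such that every $P\in\mathcal{P}$ either contains $N$ or contains $S\setminus N$. Then $$\operatorname{CC}(G,\mathcal{P})\simeq\operatorname{CC}(Q,\overline{\mathcal{P}})\ast\operatorname{CC}(N,\mathcal{P}\cap N),$$ where $\overline{\mathcal{P}}=\{q(P): P\in\mathcal{P},\ N\subseteq P\}$ and $\mathcal{P}\cap N=\{P\cap N: P\in\mathcal{P},\ S\setminus N\subseteq P\}$.
   Context: For a group $G$ and a family $\mathcal{K}$ of subgroups, the coset complex $\operatorname{CC}(G,\mathcal{K})$ is the simplicial complex whose vertices are the cosets $gK$ ($g\in G$, $K\in\mathcal{K}$; cosets of different members of $\mathcal{K}$ are different vertices) and where a finite set of vertices spans a simplex iff the cosets have nonempty common intersection. Homotopy equivalence and the join $\ast$ refer to geometric realisations. *)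

(* Defs.v *)
From HB Require Import structures.
From Stdlib Require Import List.
From mathcomp Require Import all_boot all_order all_algebra.
From mathcomp Require Import boolp classical_sets cardinality reals Rstruct.
Set Implicit Arguments. Unset Strict Implicit. Unset Printing Implicit Defensive.
Import Order.TTheory GRing.Theory Num.Theory.

Local Open Scope classical_set_scope.

Definition is_subgroup (G : groupType) (H : set G) : Prop :=
  H 1%g /\ (forall x y, H x -> H y -> H (x * y^-1)%g).

Definition generates (G : groupType) (S : set G) : Prop :=
  forall H : set G, is_subgroup H -> S `<=` H -> H = setT.

Definition kernel (G Q : groupType) (q : G -> Q) : set G := [set g | q g = 1%g].

Definition lcoset (G : groupType) (g : G) (K : set G) : set G :=
  [set (g * k)%g | k in K].

Definition complex (V : Type) := set (set V).

Definition coset_complex (G : groupType) (H : set G) (F : set (set G))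
  : complex (set G) :=
  [set S | finite_set S /\ S !=set0 /\
     (forall C, S C -> exists h K, [/\ H h, F K & C = lcoset h K]) /\
     exists x, forall C, S C -> C x].

(* Simplicial join on the disjoint union of the vertex sets; its geometric
   realisation is (homeomorphic to) the join of the realisations. *)
Definition sjoin (V W : Type) (K : complex V) (L : complex W) : complex (V + W) :=
  [set S | (K (inl @^-1` S) \/ inl @^-1` S = set0) /\
           (L (inr @^-1` S) \/ inr @^-1` S = set0)].

Local Open Scope ring_scope.
Local Notation R := Rdefinitions.R.

Definition supp (V : Type) (x : V -> R) : set V := [set v | x v != 0].

(* points of |K|: barycentric coordinates, finitely supported on a simplex *)
Definition in_real (V : Type) (K : complex V) (x : V -> R) : Prop :=
  (forall v, 0 <= x v) /\ K (supp x) /\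
  exists s : list V, NoDup s /\ (forall v, supp x v <-> In v s) /\
     fold_right (fun v acc => x v + acc) 0 s = 1.

Definition cell (V : Type) (K : complex V) (sigma : set V) : set (V -> R) :=
  [set x | in_real K x /\ supp x `<=` sigma].

Definition weak_open (V : Type) (K : complex V) (O : set (V -> R)) : Prop :=
  forall sigma, K sigma -> forall x, cell K sigma x -> O x ->
    exists2 e : R, 0 < e & forall y, cell K sigma y ->
      (forall v, `|x v - y v| < e) -> O y.

Definition in_unit (t : R) : Prop := 0 <= t <= 1.

Definition unit_open (A : set R) : Prop :=
  forall t, in_unit t -> A t -> exists2 e : R, 0 < e &
    forall s, in_unit s -> `|t - s| < e -> A s.

Definition prod_open (V : Type) (K : complex V) (W : set (R * (V -> R))) : Prop :=
  forall t x, in_unit t -> in_real K x -> W (t, x) ->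
    exists A B, [/\ unit_open A, weak_open K B, A t, B x &
      forall s y, in_unit s -> in_real K y -> A s -> B y -> W (s, y)].

Definition real_map (V W : Type) (K : complex V) (L : complex W)
  (f : (V -> R) -> (W -> R)) : Prop :=
  (forall x, in_real K x -> in_real L (f x)) /\
  (forall O, weak_open L O -> weak_open K (f @^-1` O)).

Definition homotopic (V W : Type) (K : complex V) (L : complex W)
  (f g : (V -> R) -> (W -> R)) : Prop :=
  exists H : R -> (V -> R) -> (W -> R),
    [/\ forall t x, in_unit t -> in_real K x -> in_real L (H t x),
        forall O, weak_open L O -> prod_open K [set p | O (H p.1 p.2)],
        forall x, in_real K x -> H 0 x = f x &
        forall x, in_real K x -> H 1 x = g x].

Definition homotopy_equivalent (V W : Type) (K : complex V) (L : complex W) : Prop :=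
  exists (f : (V -> R) -> (W -> R)) (g : (W -> R) -> (V -> R)),
    [/\ real_map K L f, real_map L K g,
        homotopic K K (g \o f) id & homotopic L L (f \o g) id].

(* Main.v *)
Require Import Defs.
From HB Require Import structures.
From Stdlib Require Import List.
From mathcomp Require Import all_boot all_order all_algebra.
From mathcomp Require Import boolp classical_sets cardinality reals Rstruct.
Set Implicit Arguments. Unset Strict Implicit. Unset Printing Implicit Defensive.
Import Order.TTheory GRing.Theory Num.Theory.
Local Open Scope classical_set_scope.
Local Open Scope ring_scope.
Local Notation R := Rdefinitions.R.

Definition vert (V : Type) (K : complex V) (v : V) : Prop := exists s, K s /\ s v.

Definition tr (V W : Type) (L : complex W) (psi : W -> V) (x : V -> R) : W -> R :=
  fun w => if pselect (vert L w) then x (psi w) else 0.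

Lemma in_real_ne (V : Type) (K : complex V) x : in_real K x -> supp x !=set0.
Proof.
move=> [_ [_ [s [_ [Hs Hsum]]]]].
case: s Hs Hsum => [|v s] Hs Hsum.
  by move: Hsum => /= /eqP; rewrite eq_sym oner_eq0.
by exists v; apply/Hs; left.
Qed.

Lemma tr_in (V W : Type) (L : complex W) (psi : W -> V) x w :
  vert L w -> tr L psi x w = x (psi w).
Proof. by rewrite /tr; case: (pselect (vert L w)). Qed.
Lemma tr_out (V W : Type) (L : complex W) (psi : W -> V) x w :
  ~ vert L w -> tr L psi x w = 0.
Proof. by rewrite /tr; case: (pselect (vert L w)). Qed.

Section Tr.
Variables (V W : Type) (K : complex V) (L : complex W) (phi : V -> W) (psi : W -> V).
Hypothesis h1 : forall s, K s -> s !=set0 -> L (phi @` s).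
Hypothesis h3 : forall v s, K s -> s v -> psi (phi v) = v.
Hypothesis h4 : forall w t, L t -> t w -> phi (psi w) = w.

Lemma tr_phi x v s : K s -> s v -> tr L psi x (phi v) = x v.
Proof.
move=> Ks sv; rewrite tr_in; first by rewrite (h3 Ks sv).
by exists (phi @` s); split; [apply: h1 => //; exists v | exists v].
Qed.

Lemma supp_tr x : in_real K x -> supp (tr L psi x) = phi @` supp x.
Proof.
move=> xr; have [_ [Ks _]] := xr.
apply/seteqP; split => w.
  rewrite /supp /=; case: (pselect (vert L w)) => [[t [Lt tw]]|nw]; last by rewrite tr_out // eqxx.
  rewrite tr_in; last by exists t.
  move=> H; by exists (psi w) => //; rewrite (h4 Lt tw).
move=> [v sv <-]; rewrite /supp /= (tr_phi _ Ks sv); exact: sv.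
Qed.

Lemma in_real_tr x : in_real K x -> in_real L (tr L psi x).
Proof.
move=> xr; have [x0 [Ks [s [nd [Hs Hsum]]]]] := xr.
split; first by move=> w; case: (pselect (vert L w)) => h; [rewrite tr_in|rewrite tr_out].
split; first by rewrite supp_tr //; apply: h1 => //; exact: in_real_ne xr.
exists (map phi s); split.
  apply: NoDup_map_NoDup_ForallPairs => //.
  move=> a b /Hs sa /Hs sb e.
  by rewrite -(h3 Ks sa) -(h3 Ks sb) e.
split.
  move=> w; rewrite supp_tr // in_map_iff; split.
    by move=> [v /Hs sv <-]; exists v.
  by move=> [v [<- /Hs sv]]; exists v.
rewrite -Hsum.
have : forall v, In v s -> supp x v by move=> v /Hs.
elim: s {nd Hs Hsum} => [//|v s IH] Hin /=.
rewrite (tr_phi _ Ks (Hin v (or_introl erefl))) IH // => u iu.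
by apply: Hin; right.
Qed.

Lemma cell_tr sigma x : K sigma -> cell K sigma x ->
  cell L (phi @` sigma) (tr L psi x).
Proof.
move=> Ks [xr sx]; split; first exact: in_real_tr.
by rewrite supp_tr // => w [v /sx sv <-]; exists v.
Qed.

Lemma real_map_tr : real_map K L (tr L psi).
Proof.
split; first exact: in_real_tr.
move=> O Oo sigma Ks x cx Ox.
have sne : sigma !=set0.
  have [v sv] := in_real_ne cx.1; exists v; exact: cx.2.
have [e e0 He] := Oo _ (h1 Ks sne) _ (cell_tr Ks cx) Ox.
exists e => // y cy Hxy; apply: He; first exact: cell_tr.
move=> w; case: (pselect (vert L w)) => h; first by rewrite !tr_in //.
by rewrite !tr_out // subrr normr0.
Qed.

End Tr.

Lemma iso_he (V W : Type) (K : complex V) (L : complex W) (phi : V -> W) (psi : W -> V)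
 (h1 : forall s, K s -> s !=set0 -> L (phi @` s))
 (h2 : forall t, L t -> t !=set0 -> K (psi @` t))
 (h3 : forall v s, K s -> s v -> psi (phi v) = v)
 (h4 : forall w t, L t -> t w -> phi (psi w) = w) :
 homotopy_equivalent K L.
Proof.
have gf : forall (V W : Type) (K : complex V) (L : complex W) (phi : V -> W) (psi : W -> V),
  (forall s, K s -> s !=set0 -> L (phi @` s)) ->
  (forall v s, K s -> s v -> psi (phi v) = v) ->
  (forall w t, L t -> t w -> phi (psi w) = w) ->
  forall x, in_real K x -> tr K phi (tr L psi x) = x.
  move=> V' W' K' L' f g H1 H3 H4 x xr; apply/funext => v.
  case: (pselect (vert K' v)) => [[s [Ks sv]]|nv]; last rewrite tr_out //.
    rewrite tr_in; last by exists s.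
    exact: (tr_phi H1 H3 x Ks sv).
  have [_ [Kx _]] := xr.
  case: (pselect (supp x v)) => [xv|nxv]; first by exfalso; apply: nv; exists (supp x).
  by apply/esym/eqP; move/negP: nxv; rewrite negbK.
have hid : forall (V : Type) (K : complex V) (f : (V -> R) -> (V -> R)),
   (forall x, in_real K x -> f x = x) -> homotopic K K f id.
  move=> V' K' f Hf; exists (fun _ x => x); split => //.
  - move=> O Oo t x _ _ Ox; exists setT, O; split => //.
    by move=> t' _ _; exists 1 => //.
  - by move=> x xr; rewrite Hf.
exists (tr L psi), (tr K phi); split.
- exact: (real_map_tr h1 h3 h4).
- exact: (real_map_tr h2 h4 h3).
- by apply: hid => x xr /=; apply: (gf _ _ _ _ _ _ h1 h3 h4).
- by apply: hid => x xr /=; apply: (gf _ _ _ _ _ _ h2 h4 h3).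
Qed.

Section Grp.
Variables (G Q : groupType) (q : G -> Q).
Hypothesis qM : forall x y : G, q (x * y)%g = (q x * q y)%g.
Variable S : set G.
Hypothesis genS : generates S.

Local Notation N := (kernel q).
Local Open Scope group_scope.

Lemma q1 : q 1 = 1.
Proof.
have e := qM 1 1; rewrite mul1g in e.
have := congr1 (fun z => (q 1)^-1 * z) e; rewrite mulVg mulKg => <-//.
Qed.

Lemma qV x : q (x^-1) = (q x)^-1.
Proof. by apply/esym/mulg1_eq; rewrite -qM mulgV q1. Qed.

Lemma sg1 (P : set G) : is_subgroup P -> P 1.
Proof. by case. Qed.
Lemma sgV (P : set G) x : is_subgroup P -> P x -> P x^-1.
Proof. by move=> [P1 PM] Px; have := PM _ _ P1 Px; rewrite mul1g. Qed.
Lemma sgM (P : set G) x y : is_subgroup P -> P x -> P y -> P (x * y).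
Proof. by move=> sP Px Py; have := sP.2 _ _ Px (sgV sP Py); rewrite invgK. Qed.

Lemma lcosetP (P : set G) g y : lcoset g P y <-> P (g^-1 * y).
Proof.
split; first by move=> [k Pk <-]; rewrite mulKg.
by move=> H; exists (g^-1 * y) => //; rewrite mulVKg.
Qed.

Lemma coset_self (P : set G) g : is_subgroup P -> lcoset g P g.
Proof. by move=> sP; exists 1; [exact: sg1|rewrite mulg1]. Qed.

Lemma coset_eq (P : set G) g x : is_subgroup P -> lcoset g P x -> lcoset g P = lcoset x P.
Proof.
move=> sP /lcosetP Px; apply/seteqP; split => y /lcosetP Py; apply/lcosetP.
  have -> : x^-1 * y = (g^-1*x)^-1 * (g^-1*y) by rewrite invgM invgK -mulgA mulVKg.
  by apply: sgM => //; apply: sgV.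
have -> : g^-1 * y = (g^-1*x) * (x^-1*y) by rewrite mulgA mulgK.
exact: sgM.
Qed.

Lemma coset_inj (P1 P2 : set G) g h : is_subgroup P1 -> is_subgroup P2 ->
  lcoset g P1 = lcoset h P2 -> P1 = P2.
Proof.
move=> s1 s2 e.
have e2 : lcoset g P1 = lcoset g P2.
  by rewrite e; apply: coset_eq => //; rewrite -e; apply: coset_self.
apply/seteqP; split => y Py.
  have : lcoset g P2 (g * y) by rewrite -e2; exists y.
  by move/lcosetP; rewrite mulKg.
have : lcoset g P1 (g * y) by rewrite e2; exists y.
by move/lcosetP; rewrite mulKg.
Qed.

Lemma N_sub : is_subgroup N.
Proof.
split; first exact: q1.
by move=> x y; rewrite /kernel /= qM qV => -> ->; rewrite invg1 mulg1.
Qed.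

Lemma prodHN (H : set G) : is_subgroup H -> S `\` N `<=` H ->
  forall u, exists h n, [/\ H h, N n & u = h * n].
Proof.
move=> sH SH.
pose T := [set u | exists h n, [/\ H h, N n & u = h * n]].
suff : T = setT by move=> eT u; have : T u by rewrite eT.
apply: genS.
  split; first by exists 1, 1; split; [exact: sg1 | exact: q1 | rewrite mulg1].
  move=> _ _ [h1 [n1 [H1 N1 ->]]] [h2 [n2 [H2 N2 ->]]].
  exists (h1 * h2^-1), (h2 * (n1 * n2^-1) * h2^-1); split.
  - by apply: sH.2.
  - by rewrite /kernel /= !qM !qV N1 N2 invg1 mulg1 mulg1 mulgV.
  - by rewrite !invgM !mulgA mulgVK.
move=> s Ss; case: (pselect (N s)) => Ns.
  by exists 1, s; split => //; [exact: sg1 | rewrite mul1g].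
by exists s, 1; split => //; [apply: SH | exact: q1 | rewrite mulg1].
Qed.


Lemma sgI (P1 P2 : set G) : is_subgroup P1 -> is_subgroup P2 -> is_subgroup (P1 `&` P2).
Proof.
move=> s1 s2; split; first by split; apply: sg1.
by move=> x y [? ?] [? ?]; split; [apply: s1.2|apply: s2.2].
Qed.

Lemma coset_meetN (P : set G) h : N h -> lcoset h P `&` N = lcoset h (P `&` N).
Proof.
move=> Nh; apply/seteqP; split => y.
  move=> [[k Pk <-] Ny]; exists k => //; split => //.
  by move: Ny; rewrite /kernel /= qM Nh mul1g.
move=> [k [Pk Nk] <-]; split; first by exists k.
by rewrite /kernel /= qM Nh Nk mulg1.
Qed.


Lemma cosetxP (P : set G) x h : lcoset x P (x * h) <-> P h.
Proof. by rewrite lcosetP mulKg. Qed.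

Lemma GL (I : set (set G)) x :
  (forall C, I C -> exists P, [/\ is_subgroup P, S `\` N `<=` P & C = lcoset x P]) ->
  forall y, exists z, (forall C, I C -> C z) /\ q z = q y.
Proof.
move=> HI y.
pose H := [set h | forall C, I C -> C (x * h)].
have sH : is_subgroup H.
  split.
    move=> C IC; have [P [sP _ ->]] := HI C IC; rewrite mulg1; exact: coset_self.
  move=> a b Ha Hb C IC; have [P [sP _ eC]] := HI C IC.
  move: (Ha C IC) (Hb C IC); rewrite eC !cosetxP => Pa Pb; exact: sP.2.
have SH : S `\` N `<=` H.
  move=> u Su C IC; have [P [sP SP ->]] := HI C IC; rewrite cosetxP; exact: SP.
have [h [n [Hh Nn E]]] := prodHN sH SH (x^-1 * y).
exists (x * h); split; first by move=> C IC; exact: Hh.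
have -> : y = x * h * n by rewrite -mulgA -E mulVKg.
by rewrite (qM _ n) Nn mulg1.
Qed.

Hypothesis q_surj : forall y : Q, exists x : G, q x = y.
Variable PP : set (set G).
Hypothesis PP_proper : forall P, PP P -> is_subgroup P /\ P <> setT.
Hypothesis PP_cond : forall P, PP P -> N `<=` P \/ S `\` N `<=` P.

Definition T1 (C : set G) := exists g P, [/\ PP P, N `<=` P & C = lcoset g P].
Definition T2 (C : set G) := exists g P, [/\ PP P, S `\` N `<=` P & C = lcoset g P].

Lemma not_both P : PP P -> N `<=` P -> S `\` N `<=` P -> False.
Proof.
move=> PPP NP SP; have [sP nT] := PP_proper PPP; apply: nT; apply: genS => // s Ss.
by case: (pselect (N s)) => Ns; [apply: NP | apply: SP].
Qed.

Lemma T12 C : T1 C -> T2 C -> False.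
Proof.
move=> [g1 [P1 [PP1 NP1 e1]]] [g2 [P2 [PP2 SP2 e2]]].
have e : P1 = P2 by apply: (@coset_inj _ _ g1 g2); [apply: (PP_proper PP1).1|apply: (PP_proper PP2).1|rewrite -e1 -e2].
by apply: (not_both PP1) => //; rewrite e.
Qed.

Lemma T2_meetN C : T2 C -> exists m P,
  [/\ PP P, S `\` N `<=` P, N m, C = lcoset m P & C `&` N = lcoset m (P `&` N)].
Proof.
move=> [g [P [PPP SP eC]]]; have sP := (PP_proper PPP).1.
have [h [n [Ph Nn E]]] := prodHN sP SP g^-1.
have Nm : N (g * h).
  have := congr1 q E; rewrite qV qM Nn mulg1 => e.
  by rewrite /kernel /= qM -e mulgV.
have Cm : C (g * h) by rewrite eC; exists h.
exists (g * h), P; split => //.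
  by rewrite eC; apply: coset_eq => //; rewrite -eC.
have -> : C = lcoset (g * h) P by rewrite eC; apply: coset_eq => //; rewrite -eC.
exact: coset_meetN.
Qed.

Lemma sub_from_meet P1 P2 : is_subgroup P1 -> is_subgroup P2 ->
  S `\` N `<=` P1 -> S `\` N `<=` P2 -> P1 `&` N `<=` P2 -> P1 `<=` P2.
Proof.
move=> s1 s2 S1 S2 I12 x P1x.
have sI := sgI s1 s2.
have [h [n [[Ph1 Ph2] Nn E]]] := prodHN sI (fun u Su => conj (S1 u Su) (S2 u Su)) x.
have P2n : P2 n.
  apply: I12; split => //.
  have -> : n = h^-1 * x by rewrite E mulKg.
  by apply: sgM => //; apply: sgV.
by rewrite E; apply: sgM.
Qed.

Lemma T2_uniq C1 C2 : T2 C1 -> T2 C2 -> C1 `&` N = C2 `&` N -> C1 = C2.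
Proof.
move=> /T2_meetN [m1 [P1 [PP1 S1 N1 e1 f1]]] /T2_meetN [m2 [P2 [PP2 S2 N2 e2 f2]]] e.
have s1 := (PP_proper PP1).1; have s2 := (PP_proper PP2).1.
have C2m1 : C2 m1.
  have : (C1 `&` N) m1 by rewrite f1; exists 1; [split; [exact: sg1| exact: q1] | rewrite mulg1].
  by rewrite e => -[].
have e2' : C2 = lcoset m1 P2 by rewrite e2; apply: coset_eq => //; rewrite -e2.
have I12 : forall A B (CA CB : set G), is_subgroup A -> is_subgroup B ->
   CA = lcoset m1 A -> CB = lcoset m1 B -> CA `&` N = CB `&` N -> A `&` N `<=` B.
  move=> A B CA CB sA sB eA eB eAB k [Ak Nk].
  have : (CA `&` N) (m1 * k).
    split; first by rewrite eA cosetxP.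
    by rewrite /kernel /= qM N1 Nk mulg1.
  by rewrite eAB => -[]; rewrite eB cosetxP.
have eP : P1 = P2.
  apply/seteqP; split; apply: sub_from_meet => //.
    exact: (I12 _ _ _ _ s1 s2 e1 e2').
  exact: (I12 _ _ _ _ s2 s1 e2' e1 (esym e)).
by rewrite e1 e2' eP.
Qed.

Lemma T1_img C : T1 C -> q @^-1` (q @` C) = C.
Proof.
move=> [g [P [PPP NP eC]]]; have sP := (PP_proper PPP).1.
apply/seteqP; split => y; last by move=> Cy; exists y.
move=> [c Cc eq].
have -> : C = lcoset c P by rewrite eC; apply: coset_eq => //; rewrite -eC.
apply/lcosetP; apply: NP.
by rewrite /kernel /= qM qV eq mulVg.
Qed.

Lemma img_coset g (P : set G) : q @` lcoset g P = lcoset (q g) (q @` P).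
Proof.
apply/seteqP; split => z.
  by move=> [c [k Pk <-] <-]; exists (q k); [exists k | rewrite qM].
by move=> [_ [k Pk <-] <-]; exists (g * k); [exists k | rewrite qM].
Qed.

Lemma pre_coset g (P : set G) : is_subgroup P -> N `<=` P ->
  q @^-1` lcoset (q g) (q @` P) = lcoset g P.
Proof.
move=> sP NP; apply/seteqP; split => z.
  move=> [_ [p Pp <-] E]; apply/lcosetP.
  have -> : g^-1 * z = p * (p^-1 * (g^-1 * z)) by rewrite mulVKg.
  apply: sgM => //; apply: NP.
  by rewrite /kernel /= !qM !qV -E mulgA -invgM mulVg.
by move=> [k Pk <-]; exists (q k); [exists k | rewrite /= qM].
Qed.


Definition phi (C : set G) : set Q + set G :=
  if pselect (T1 C) then inl (q @` C) else inr (C `&` N).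

Definition psi (w : set Q + set G) : set G :=
  match w with
  | inl D => q @^-1` D
  | inr E => match pselect (exists C, T2 C /\ C `&` N = E) with
             | left h => proj1_sig (cid h)
             | right _ => set0 end
  end.

Lemma psiR E : (exists C, T2 C /\ C `&` N = E) -> T2 (psi (inr E)) /\ psi (inr E) `&` N = E.
Proof.
move=> ex /=; case: (pselect (exists C, T2 C /\ C `&` N = E)) => [h|//].
exact: (proj2_sig (cid h)).
Qed.

Lemma phi_T1 C : T1 C -> phi C = inl (q @` C).
Proof. by rewrite /phi; case: (pselect (T1 C)). Qed.
Lemma phi_T2 C : T2 C -> phi C = inr (C `&` N).
Proof. by move=> h2; rewrite /phi; case: (pselect (T1 C)) => // h1; case: (T12 h1 h2). Qed.
Lemma phi_inl C D : phi C = inl D -> T1 C /\ D = q @` C.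
Proof. by rewrite /phi; case: (pselect (T1 C)) => // h [<-]. Qed.
Lemma phi_inr C E : phi C = inr E -> ~ T1 C /\ E = C `&` N.
Proof. by rewrite /phi; case: (pselect (T1 C)) => // h [<-]. Qed.

Definition KG := coset_complex setT PP.
Definition KQ := coset_complex setT
          [set Pb | exists2 P, PP P /\ N `<=` P & Pb = q @` P].
Definition KN := coset_complex N
          [set PN | exists2 P, PP P /\ S `\` N `<=` P & PN = P `&` N].

Lemma vertG s C : KG s -> s C -> T1 C \/ T2 C.
Proof.
move=> [_ [_ [cos _]]] sC; have [g [P [_ PPP ->]]] := cos C sC.
by case: (PP_cond PPP) => h; [left|right]; exists g, P.
Qed.

Lemma vertQ A D : KQ A -> A D -> exists g P, [/\ PP P, N `<=` P & D = lcoset (q g) (q @` P)].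
Proof.
move=> [_ [_ [cos _]]] AD; have [y [Kb [_ [P [PPP NP] eK] eD]]] := cos D AD.
have [g eg] := q_surj y; by exists g, P; rewrite eg -eK.
Qed.

Lemma vertN B E : KN B -> B E -> exists h P, [/\ PP P, S `\` N `<=` P, N h & E = lcoset h (P `&` N)].
Proof.
move=> [_ [_ [cos _]]] BE; have [h [Kb [Nh [P [PPP SP] eK] eE]]] := cos E BE.
by exists h, P; rewrite -eK.
Qed.

Lemma vertN_ex B E : KN B -> B E -> exists C, T2 C /\ C `&` N = E.
Proof.
move=> KB BE; have [h [P [PPP SP Nh ->]]] := vertN KB BE.
exists (lcoset h P); split; first by exists h, P.
exact: coset_meetN.
Qed.

Lemma h3 C s : KG s -> s C -> psi (phi C) = C.
Proof.
move=> Ks sC; case: (vertG Ks sC) => hT.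
  by rewrite phi_T1 //= T1_img.
rewrite phi_T2 //.
have [hT' e] := psiR (ex_intro _ C (conj hT erefl)).
exact: T2_uniq.
Qed.

Lemma h4 w t : sjoin KQ KN t -> t w -> phi (psi w) = w.
Proof.
move=> [HA HB]; case: w => [D|E] tw.
  have KA : KQ (inl @^-1` t).
    case: HA => // A0; have : (inl @^-1` t) D by [].
    by rewrite A0.
  have [g [P [PPP NP ->]]] := vertQ KA tw.
  have sP := (PP_proper PPP).1.
  rewrite /= pre_coset // phi_T1; last by exists g, P.
  by rewrite img_coset.
have KB : KN (inr @^-1` t).
  case: HB => // B0; have : (inr @^-1` t) E by [].
  by rewrite B0.
have [hT e] := psiR (vertN_ex KB tw).
by rewrite phi_T2 // e.
Qed.


Lemma h1 s : KG s -> s !=set0 -> sjoin KQ KN (phi @` s).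
Proof.
move=> Ks _; have [fin [ne [cos [x cx]]]] := Ks.
split.
  case: (pselect (exists D, (inl @^-1` (phi @` s)) D)) => [[D0 AD0]|nA]; last first.
    right; apply/seteqP; split => D AD //; exfalso; apply: nA; by exists D.
  left; split.
    apply: (sub_finite_set _ (finite_image (fun C => q @` C) fin)).
    by move=> D [C sC eC]; have [_ ->] := phi_inl eC; exists C.
  split; first by exists D0.
  split.
    move=> D [C sC eC]; have [[g [P [PPP NP ->]]] ->] := phi_inl eC.
    exists (q g), (q @` P); split => //; [by exists P | exact: img_coset].
  by exists (q x) => D [C sC eC]; have [_ ->] := phi_inl eC; exists x; [apply: cx|].
case: (pselect (exists E, (inr @^-1` (phi @` s)) E)) => [[E0 BE0]|nB]; last first.
  right; apply/seteqP; split => E BE //; exfalso; apply: nB; by exists E.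
left; split.
  apply: (sub_finite_set _ (finite_image (fun C => C `&` N) fin)).
  by move=> E [C sC eC]; have [_ ->] := phi_inr eC; exists C.
split; first by exists E0.
split.
  move=> E [C sC eC]; have [nT ->] := phi_inr eC.
  have hT : T2 C by case: (vertG Ks sC).
  have [m [P [PPP SP Nm _ ->]]] := T2_meetN hT.
  exists m, (P `&` N); split => //; by exists P.
have HI : forall C, [set C | s C /\ T2 C] C ->
    exists P, [/\ is_subgroup P, S `\` N `<=` P & C = lcoset x P].
  move=> C [sC hT]; have [g [P [PPP SP eC]]] := hT; have sP := (PP_proper PPP).1.
  exists P; split => //; rewrite eC; apply: coset_eq => //; rewrite -eC; exact: cx.
have [z [Hz qz]] := GL HI 1.
exists z => E [C sC eC]; have [nT ->] := phi_inr eC.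
have hT : T2 C by case: (vertG Ks sC).
split; [exact: Hz | by rewrite /kernel /= qz q1].
Qed.

Lemma h2 t : sjoin KQ KN t -> t !=set0 -> KG (psi @` t).
Proof.
move=> [HA HB] [w0 tw0].
pose A := inl @^-1` t; pose B := inr @^-1` t.
change (KQ A \/ A = set0) in HA; change (KN B \/ B = set0) in HB.
have finA : finite_set A by case: HA => [[f _]|->]; [exact: f|exact: finite_set0].
have finB : finite_set B by case: HB => [[f _]|->]; [exact: f|exact: finite_set0].
have [x0 Hx0] : exists x0, forall D, A D -> D (q x0).
  case: HA => [[_ [_ [_ [y0 Hy0]]]]|A0]; first by have [x0 ex] := q_surj y0; exists x0; rewrite ex.
  by exists 1 => D; rewrite A0.
have KBof : forall E, B E -> KN B.
  by move=> E BE; case: HB => // B0; move: BE; rewrite B0.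
have KAof : forall D, A D -> KQ A.
  by move=> D AD; case: HA => // A0; move: AD; rewrite A0.
have [m [Nm Hm]] : exists m, N m /\ forall E, B E -> E m.
  case: HB => [KB|B0]; last by exists 1; split; [exact: q1| move=> E; rewrite B0].
  have [_ [[E0 BE0] [_ [m Hm]]]] := KB.
  exists m; split => //.
  have [h [P [PPP SP Nh eE]]] := vertN KB BE0.
  have := Hm E0 BE0; rewrite eE => -[k [_ Nk] <-].
  by rewrite /kernel /= qM Nh Nk mulg1.
have HI : forall C, [set C | exists E, B E /\ C = psi (inr E)] C ->
    exists P, [/\ is_subgroup P, S `\` N `<=` P & C = lcoset m P].
  move=> C [E [BE ->]].
  have [hT e] := psiR (vertN_ex (KBof E BE) BE).
  have [g [P [PPP SP eC]]] := hT; have sP := (PP_proper PPP).1.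
  exists P; split => //; rewrite eC; apply: coset_eq => //; rewrite -eC.
  have : (psi (inr E) `&` N) m by rewrite e; exact: Hm.
  by case.
have [z [Hz qz]] := GL HI x0.
split.
  apply: finite_image; apply: (sub_finite_set (B := inl @` A `|` inr @` B)).
    by case => [D|E] tw; [left; exists D | right; exists E].
  by rewrite finite_setU; split; apply: finite_image.
split; first by exists (psi w0), w0.
split.
  move=> C [[D|E] tw <-].
    have [g [P [PPP NP ->]]] := vertQ (KAof D tw) tw.
    exists g, P; split => //; exact: pre_coset (PP_proper PPP).1 NP.
  have [hT _] := psiR (vertN_ex (KBof E tw) tw).
  by have [g [P [PPP _ ->]]] := hT; exists g, P.
exists z => C [[D|E] tw <-].
  by rewrite /= qz; exact: Hx0.
exact: Hz (ex_intro _ E (conj tw erefl)).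
Qed.

Lemma main_he : homotopy_equivalent KG (sjoin KQ KN).
Proof. exact: (iso_he h1 h2 h3 h4). Qed.

End Grp.

Local Close Scope ring_scope.

Theorem corollary3p20 (G Q : groupType) (q : G -> Q)
  (qM : forall x y : G, q (x * y)%g = (q x * q y)%g)
  (q_surj : forall y : Q, exists x : G, q x = y)
  (S : set G) (genS : generates S)
  (PP : set (set G))
  (PP_proper : forall P, PP P -> is_subgroup P /\ P <> setT)
  (PP_cond : forall P, PP P -> kernel q `<=` P \/ S `\` kernel q `<=` P) :
  homotopy_equivalent
    (coset_complex setT PP)
    (sjoin
       (coset_complex setT
          [set Pb | exists2 P, PP P /\ kernel q `<=` P & Pb = q @` P])
       (coset_complex (kernel q)
          [set PN | exists2 P, PP P /\ S `\` kernel q `<=` P & PN = P `&` kernel q])).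
Proof.
exact: (main_he qM genS q_surj PP_proper PP_cond).
Qed.
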